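(* Let $m$ be an even positive integer. The right cosets $\Gamma_0(2)^+\gamma$ for $\gamma\in M^m$ are pairwise distinct.
   Context: Matrices are elements of $GL_2^+(\mathbb{R})$ considered up to sign. $\Gamma_0(2)=\{\begin{bmatrix}a&b\\c&d\end{bmatrix}\in SL_2(\mathbb{Z}): c\equiv0\pmod 2\}$, $w_2=2^{-1/2}\begin{bmatrix}0&-1\\2&0\end{bmatrix}$, $\Gamma_0(2)^+$ is the group generated by $\Gamma_0(2)$ and $w_2$. With integers $x,z>0$, $y$: $M_1^m=\{\begin{bmatrix}x&y\\0&z\end{bmatrix}: xz=m,\ 0\leq y<z,\ \gcd(x,y,z)=1,\ x\text{ odd}\}$, $S_1^m=\{\begin{bmatrix}x&y\\0&z\end{bmatrix}: xz=m,\ 0\leq y<z,\ \gcd(x,y,z)=1,\ z\text{ odd}\}$, $S_2^m=\{2^{-1/2}\begin{bmatrix}x&y\\0&z\end{bmatrix}: xz=2m,\ 0\leq y<z,\ \gcd(x,y,z)=1,\ x,z\text{ even}\}$, $M^m=M_1^m\cup S_1^m\cup S_2^m$. *)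

(* Defs.v *)
From HB Require Import structures.
From mathcomp Require Import all_boot all_order all_algebra.
From mathcomp Require Import reals.
Set Implicit Arguments. Unset Strict Implicit. Unset Printing Implicit Defensive.
Import Order.TTheory GRing.Theory Num.Theory.
Local Open Scope ring_scope.

Definition mx2 {R : realType} (a b c d : R) : 'M[R]_2 :=
  \matrix_(i < 2, j < 2)
    if (i == 0 :> nat) then (if (j == 0 :> nat) then a else b)
    else (if (j == 0 :> nat) then c else d).

Definition Gamma0_2 {R : realType} (A : 'M[R]_2) : Prop :=
  exists a b c d : int,
    A = mx2 a%:~R b%:~R c%:~R d%:~R /\ a * d - b * c = 1 /\ (2 %| c)%Z.

Definition w2 {R : realType} : 'M[R]_2 := (Num.sqrt (2 : R))^-1 *: mx2 0 (-1) 2 0.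

Inductive Gamma0_2_plus {R : realType} : 'M[R]_2 -> Prop :=
  | G2p_base A : Gamma0_2 A -> Gamma0_2_plus A
  | G2p_w2 : Gamma0_2_plus w2
  | G2p_mul A B : Gamma0_2_plus A -> Gamma0_2_plus B -> Gamma0_2_plus (A *m B)
  | G2p_inv A : Gamma0_2_plus A -> Gamma0_2_plus (invmx A).

(* right coset Gamma_0(2)^+ g in GL_2^+(R) modulo sign: the set of
   (representatives of) elements +- h g with h in Gamma_0(2)^+ *)
Definition right_coset {R : realType} (g : 'M[R]_2) : 'M[R]_2 -> Prop :=
  fun A => exists h, Gamma0_2_plus h /\ (A = h *m g \/ A = - (h *m g)).

Definition upper_cond (m : nat) (x y z : int) : Prop :=
  0 < x /\ 0 < z /\ 0 <= y < z /\ gcdz x (gcdz y z) = 1.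

Definition M1 {R : realType} (m : nat) (g : 'M[R]_2) : Prop :=
  exists x y z : int, upper_cond m x y z /\ x * z = m%:Z /\ odd `|x|%N /\
    g = mx2 x%:~R y%:~R 0 z%:~R.

Definition S1 {R : realType} (m : nat) (g : 'M[R]_2) : Prop :=
  exists x y z : int, upper_cond m x y z /\ x * z = m%:Z /\ odd `|z|%N /\
    g = mx2 x%:~R y%:~R 0 z%:~R.

Definition S2 {R : realType} (m : nat) (g : 'M[R]_2) : Prop :=
  exists x y z : int, upper_cond m x y z /\ x * z = (2 * m)%:Z /\
    ~~ odd `|x|%N /\ ~~ odd `|z|%N /\
    g = (Num.sqrt (2 : R))^-1 *: mx2 x%:~R y%:~R 0 z%:~R.

Definition Mset {R : realType} (m : nat) (g : 'M[R]_2) : Prop :=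
  M1 m g \/ S1 m g \/ S2 m g.

(* Main.v *)
Require Import Defs.
From HB Require Import structures.
From mathcomp Require Import all_boot all_order all_algebra.
From mathcomp Require Import reals.
From mathcomp Require Import ring lra zify.
Import Order.TTheory GRing.Theory Num.Theory.
Local Open Scope ring_scope.

Lemma u1 (a d : int) : a * d = 1 -> (a = 1 /\ d = 1) \/ (a = -1 /\ d = -1).
Proof. move=> H. have : (a <= -2) \/ a = -1 \/ a = 0 \/ a = 1 \/ 2 <= a by lia. have : (d <= -1) \/ d = 0 \/ 1 <= d by lia. case=> [h|[h|h]]; case=> [h1|[h1|[h1|[h1|h1]]]]; nia. Qed.
Lemma u2 (y M : int) : 2*(y*y) <> (2*M+1)*(2*M+1).
Proof. nia. Qed.
Lemma u3 (y1 y2 z k : int) : 0 <= y1 < z -> 0 <= y2 < z -> y1 = y2 + k * z -> y1 = y2.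
Proof. move=> h1 h2 h3. have : (k <= -1) \/ k = 0 \/ 1 <= k by lia. case=> [h|[h|h]]; nia. Qed.
Lemma u4 (A D : int) : 2*A*D - 0 = 1 -> False.
Proof. lia. Qed.
Lemma u5 (n : nat) : ~~ odd n -> exists k, Posz n = 2 * k.
Proof. move=> H; exists (Posz n./2). lia. Qed.
Lemma u6 (y : int) : ~ (exists q, y = 2*q+1) -> exists q, y = 2 * q.
Proof. move=> H. exists (y %/ 2)%Z. case: (boolP ((y %% 2)%Z == 0)). move/eqP => h. lia.
 move=> h; case: H. exists (y %/ 2)%Z. lia. Qed.

Section S.
Variable R : realType.
Implicit Types a b c d : R.

Lemma mx2_inj a b c d a' b' c' d' : mx2 a b c d = mx2 a' b' c' d' ->
  [/\ a = a', b = b', c = c' & d = d'].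
Proof.
move=> E; split;
[ move: (congr1 (fun M : 'M[R]_2 => M 0 0) E)
| move: (congr1 (fun M : 'M[R]_2 => M 0 1) E)
| move: (congr1 (fun M : 'M[R]_2 => M 1 0) E)
| move: (congr1 (fun M : 'M[R]_2 => M 1 1) E)]; by rewrite /mx2 !mxE.
Qed.

Lemma mx2_eta (M : 'M[R]_2) : M = mx2 (M 0 0) (M 0 1) (M 1 0) (M 1 1).
Proof.
apply/matrixP => i j; rewrite /mx2 mxE.
by case: i => [[|[|?]] ?] //; case: j => [[|[|?]] ?] //=; congr (M _ _); apply: val_inj.
Qed.

Lemma mx2_mul a b c d a' b' c' d' :
  mx2 a b c d *m mx2 a' b' c' d' =
  mx2 (a*a' + b*c') (a*b' + b*d') (c*a' + d*c') (c*b' + d*d').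
Proof.
apply/matrixP => i j; rewrite !mxE !big_ord_recr big_ord0 /= !mxE /= add0r.
by case: i => [[|[|?]] ?] //; case: j => [[|[|?]] ?].
Qed.

Lemma mx2_scale k a b c d : k *: mx2 a b c d = mx2 (k*a) (k*b) (k*c) (k*d).
Proof.
apply/matrixP => i j; rewrite !mxE.
by case: i => [[|[|?]] ?] //; case: j => [[|[|?]] ?].
Qed.

Lemma mx2_opp a b c d : - mx2 a b c d = mx2 (-a) (-b) (-c) (-d).
Proof.
apply/matrixP => i j; rewrite !mxE.
by case: i => [[|[|?]] ?] //; case: j => [[|[|?]] ?].
Qed.

Lemma mx2_1 : (1%:M : 'M[R]_2) = mx2 1 0 0 1.
Proof.
apply/matrixP => i j; rewrite !mxE.
by case: i => [[|[|?]] ?] //; case: j => [[|[|?]] ?].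
Qed.

Lemma mx2_inv a b c d : a * d - b * c = 1 ->
  invmx (mx2 a b c d) = mx2 d (-b) (-c) a.
Proof.
move=> H.
have E : mx2 a b c d *m mx2 d (-b) (-c) a = 1%:M.
  rewrite mx2_mul mx2_1; congr mx2; try rewrite -H; ring.
have [U _] := mulmx1_unit E.
by rewrite -[RHS]mul1mx -(mulVmx U) -mulmxA E mulmx1.
Qed.


Definition r2 : R := (Num.sqrt (2 : R))^-1.

Lemma sq2 : Num.sqrt (2:R) * Num.sqrt 2 = 2.
Proof. by rewrite -expr2 sqr_sqrtr // ler0n. Qed.

Lemma sqrt2_gt0 : 0 < Num.sqrt (2:R).
Proof. by rewrite sqrtr_gt0 ltr0n. Qed.

Lemma r2r2 : r2 * r2 = 2^-1.
Proof. by rewrite /r2 -invfM sq2. Qed.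

Lemma r2_gt0 : 0 < r2.
Proof. by rewrite /r2 invr_gt0 sqrt2_gt0. Qed.

Lemma rrE x y : r2 * x * (r2 * y) = x * y / 2.
Proof. rewrite (_ : r2 * x * (r2 * y) = (r2 * r2) * (x * y)); last by ring.
by rewrite r2r2 mulrC. Qed.

Definition Gi (h : 'M[R]_2) := exists a b c d : int,
  h = mx2 a%:~R b%:~R (2*c)%:~R d%:~R /\ a*d - b*(2*c) = 1.
Definition Wi (h : 'M[R]_2) := exists A B C D : int,
  h = mx2 (r2*(2*A)%:~R) (r2*B%:~R) (r2*(2*C)%:~R) (r2*(2*D)%:~R) /\ 2*A*D - B*C = 1.
Definition Inv h := Gi h \/ Wi h.

Lemma Inv_mul h1 h2 : Inv h1 -> Inv h2 -> Inv (h1 *m h2).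
Proof.
case=> [[a [b [c [d [-> H1]]]]] | [A [B [C [D [-> H1]]]]]]
  [[a' [b' [c' [d' [-> H2]]]]] | [A' [B' [C' [D' [-> H2]]]]]].
- left; exists (a*a' + b*(2*c')), (a*b'+b*d'), (c*a'+d*c'), (2*c*b'+d*d'); split.
    by rewrite mx2_mul; congr mx2; ring.
  transitivity ((a*d - b*(2*c))*(a'*d'-b'*(2*c'))); [ring | by rewrite H1 H2].
- right; exists (a*A'+b*C'), (a*B'+2*b*D'), (2*c*A'+d*C'), (c*B'+d*D'); split.
    by rewrite mx2_mul; congr mx2; ring.
  transitivity ((a*d - b*(2*c))*(2*A'*D'-B'*C')); [ring | by rewrite H1 H2].
- right; exists (A*a'+B*c'), (2*A*b'+B*d'), (C*a'+2*D*c'), (C*b'+D*d'); split.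
    by rewrite mx2_mul; congr mx2; ring.
  transitivity ((2*A*D-B*C)*(a'*d' - b'*(2*c'))); [ring | by rewrite H1 H2].
- left; exists (2*A*A'+B*C'), (A*B'+B*D'), (C*A'+D*C'), (C*B'+2*D*D'); split.
    by rewrite mx2_mul !rrE; congr mx2; field.
  transitivity ((2*A*D-B*C)*(2*A'*D'-B'*C')); [ring | by rewrite H1 H2].
Qed.

Lemma Inv_inv h : Inv h -> Inv (invmx h).
Proof.
case=> [[a [b [c [d [-> H1]]]]] | [A [B [C [D [-> H1]]]]]].
- left; exists d, (-b), (-c), a; split.
    rewrite mx2_inv; first by congr mx2; ring.
    transitivity ((a*d - b*(2*c))%:~R : R); [ring | by rewrite H1].
  transitivity (a*d - b*(2*c)); [ring | exact H1].
- right; exists D, (-B), (-C), A; split.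
    rewrite mx2_inv; first by congr mx2; ring.
    rewrite !rrE; transitivity ((2*A*D-B*C)%:~R : R); [field | by rewrite H1].
  by []. transitivity (2*A*D-B*C); [ring | exact H1].
Qed.

Lemma Inv_w2 : Inv w2.
Proof.
right; exists 0, (-1), 1, 0; split => //.
by rewrite /w2 mx2_scale; congr mx2; rewrite /r2; ring.
Qed.

Lemma Inv_base h : Gamma0_2 h -> Inv h.
Proof.
case=> [a [b [c [d [-> [H1 /dvdzP [q Hq]]]]]]].
left; exists a, b, q, d; rewrite Hq mulrC; split => //.
by rewrite Hq (mulrC q) in H1.
Qed.

Lemma Inv_G h : Gamma0_2_plus h -> Inv h.
Proof.
elim=> *; [exact: Inv_base | exact: Inv_w2 | exact: Inv_mul | exact: Inv_inv].
Qed.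

Lemma castI (m n : int) : (m%:~R : R) = n%:~R -> m = n.
Proof. by move/eqP; rewrite eqr_int => /eqP. Qed.

Lemma oddy (x y z : int) : gcdz x (gcdz y z) = 1 -> (exists x', x = 2*x') ->
  (exists z', z = 2*z') -> exists q, y = 2*q+1.
Proof.
move=> G [x' Hx] [z' Hz]; exists (y %/ 2)%Z.
case: (boolP ((y %% 2)%Z == 0)) => [/eqP h|h]; last by lia.
have : (2 %| gcdz x (gcdz y z))%Z.
  rewrite !dvdz_gcd; apply/and3P; split; apply/dvdzP.
  - by exists x'; lia.
  - by exists (y %/ 2)%Z; lia.
  - by exists z'; lia.
by rewrite G.
Qed.

Lemma Mform m g : Mset m g -> exists k (x y z : int), upper_cond m x y z /\
  g = mx2 (k*x%:~R) (k*y%:~R) 0 (k*z%:~R) /\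
  (k = 1 \/ (k = r2 /\ (exists q, y = 2*q+1) /\ exists z', z = 2*z')).
Proof.
case=> [|[]] [x [y [z [U [_ H]]]]].
- case: H => _ ->; exists 1, x, y, z; split => //; split; last by left.
  by rewrite !mul1r.
- case: H => _ ->; exists 1, x, y, z; split => //; split; last by left.
  by rewrite !mul1r.
- case: H => Hx [Hz ->]; exists r2, x, y, z; split => //; split.
    by rewrite mx2_scale mulr0.
  right; split => //.
  case: U => hx [hz [hy G]].
  have ex : exists x', x = 2 * x'.
    by move: Hx; case: x hx {G} => [n|n] //= _ Hn; exists (Posz n./2); lia.
  have ez : exists z', z = 2 * z'.
    by move: Hz; case: z hz {G hy} => [n|n] //= _ Hn; exists (Posz n./2); lia.
  split => //; exact: oddy G ex ez.
Qed.

Lemma odd_sq_contra (y1 y2 : int) (q : int) : y2 = 2*q+1 -> ((2*(y1*y1))%:~R : R) = (y2*y2)%:~R -> False.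
Proof. by move=> -> /castI; apply: u2. Qed.

Lemma keyG (k1 k2 s : R) (x1 y1 z1 x2 y2 z2 a b : int) :
  s*s = 1 -> a*a = 1 ->
  (k1 = 1 \/ (k1 = r2 /\ (exists q, y1 = 2*q+1) /\ exists z', z1 = 2*z')) ->
  (k2 = 1 \/ (k2 = r2 /\ (exists q, y2 = 2*q+1) /\ exists z', z2 = 2*z')) ->
  0 < x1 -> 0 < x2 -> 0 <= y1 < z1 -> 0 <= y2 < z2 ->
  k1 * x1%:~R = s*a%:~R*(k2*x2%:~R) ->
  k1 * y1%:~R = s*(a%:~R*(k2*y2%:~R) + b%:~R*(k2*z2%:~R)) ->
  k1 * z1%:~R = s*a%:~R*(k2*z2%:~R) ->
  [/\ k1 = k2, x1 = x2, y1 = y2 & z1 = z2].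
Proof.
move=> Hs Ha K1 K2 hx1 hx2 hy1 hy2 ex ey ez.
have a1 : a = 1 \/ a = -1 by have := @u1 a a Ha; lia.
pose N := a*y2 + b*z2.
have same : forall k, 0 < k -> k1 = k -> k2 = k -> [/\ k1 = k2, x1 = x2, y1 = y2 & z1 = z2].
  move=> k kp E1 E2; subst k1 k2.
  have kn : k != 0 by rewrite gt_eqF.
  pose t := s * a%:~R.
  have tt : t * t = 1.
    rewrite /t; transitivity ((s*s)*((a*a)%:~R : R)); first by ring.
    by rewrite Hs Ha mul1r.
  have X : (x1%:~R : R) = t * x2%:~R by apply: (mulfI kn); rewrite ex /t; ring.
  have X1 : (0 : R) < x1%:~R by rewrite ltr0z.
  have X2 : (0 : R) < x2%:~R by rewrite ltr0z.
  have t1 : t = 1 by nra.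
  have Z : (z1%:~R : R) = z2%:~R.
    by apply: (mulfI kn); rewrite ez -[s * a%:~R]/t t1; ring.
  have sa : s = t * a%:~R.
    rewrite /t; transitivity (s * ((a*a)%:~R)); last by ring.
    by rewrite Ha mulr1.
  have Y : (y1%:~R : R) = (y2 + a*b*z2)%:~R.
    apply: (mulfI kn); rewrite ey sa t1.
    transitivity (k * (((a*a)%:~R : R) * y2%:~R + (a*b)%:~R * z2%:~R)); first by ring.
    by rewrite Ha; ring.
  have x12 : x1 = x2 by apply: castI; rewrite X t1 mul1r.
  have z12 : z1 = z2 by apply: castI Z.
  split => //; apply: (@u3 y1 y2 z2 (a*b)); [by rewrite -z12 | by [] | exact: castI Y].
case: K1 => [E1|[E1 [[q1 Hq1] _]]]; case: K2 => [E2|[E2 [[q2 Hq2] [z' Hz']]]].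
- by apply: (same 1) => //; rewrite ltr01.
- exfalso.
  have NO : exists M, N = 2*M+1.
    rewrite /N Hq2 Hz'; case: a1 => ->.
      by exists (q2 + b*z'); ring.
    by exists (b*z' - q2 - 1); ring.
  case: NO => M HM.
  have Ey : (y1%:~R : R) = s * r2 * N%:~R by move: ey; rewrite E1 E2 mul1r => ->; rewrite /N; ring.
  have EQ : ((2*(y1*y1))%:~R : R) = (N*N)%:~R.
    transitivity (2 * (s*s) * (r2*r2) * (N%:~R * N%:~R) : R).
      by rewrite intrM intrM Ey; ring.
    by rewrite Hs r2r2 intrM; field.
  exact: (@odd_sq_contra y1 N M HM EQ).
- exfalso.
  have Ey : (r2 * y1%:~R : R) = s * N%:~R by move: ey; rewrite E1 E2 => ->; rewrite /N; ring.
  have EQ : ((2*(N*N))%:~R : R) = (y1*y1)%:~R.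
    transitivity (2 * (s*s) * (N%:~R * N%:~R) : R).
      by rewrite Hs intrM intrM; ring.
    transitivity (2 * (s * N%:~R) * (s * N%:~R) : R); first by ring.
    rewrite -Ey.
    transitivity (2 * (r2 * r2) * (y1%:~R * y1%:~R) : R); first by ring.
    by rewrite r2r2 intrM; field.
  exact: (@odd_sq_contra N y1 q1 Hq1 EQ).
- by apply: (same r2) => //; apply: r2_gt0.
Qed.

End S.
Arguments Mform {R m g}.
Arguments keyG {R k1 k2 s x1 y1 z1 x2 y2 z2 a b}.
Arguments Inv_G {R h}.
Arguments mx2_inj {R a b c d a' b' c' d'}.

Theorem lemma2p2 (R : realType) (m : nat) (m_pos : (0 < m)%N) (m_even : ~~ odd m)
  (g1 g2 : 'M[R]_2) :
  Mset m g1 -> Mset m g2 -> right_coset g1 = right_coset g2 -> g1 = g2.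
Proof.
move=> H1 H2 E.
have : right_coset g2 g1.
  rewrite -E; exists 1%:M; split; last by left; rewrite mul1mx.
  apply: G2p_base; exists 1, 0, 0, 1; split; last by [].
  by rewrite mx2_1; congr mx2; ring.
case=> h [/Inv_G Hh Hg].
have [k1 [x1 [y1 [z1 [U1 [Eg1 K1]]]]]] := Mform H1.
have [k2 [x2 [y2 [z2 [U2 [Eg2 K2]]]]]] := Mform H2.
have [s [Hs Eg]] : exists s : R, s * s = 1 /\ g1 = s *: (h *m g2).
  case: Hg => ->; [exists 1 | exists (-1)]; rewrite ?scale1r ?scaleN1r; split => //.
    by rewrite mulr1.
  by rewrite mulrNN mulr1.
have k2n : k2 != 0.
  by case: K2 => [->|[-> _]]; [exact: oner_neq0 | rewrite gt_eqF // r2_gt0].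
have r2n : (r2 R) != 0 by rewrite gt_eqF // r2_gt0.
have sn : s != 0.
  by apply/eqP => s0; move: Hs; rewrite s0 mul0r => /eqP; rewrite eq_sym oner_eq0.
case: (U1) (U2) => hx1 [hz1 [hy1 _]] [hx2 [hz2 [hy2 _]]].
have x2n : (x2%:~R : R) != 0 by rewrite intr_eq0; lia.
rewrite Eg1 Eg2 in Eg.
case: Hh => [[a [b [c [d [Eh H]]]]] | [A [B [C [D [Eh H]]]]]]; rewrite Eh in Eg;
  rewrite mx2_mul mx2_scale in Eg; have [e00 e01 e10 e11] := mx2_inj Eg.
- have c0 : c = 0.
    move: e10; rewrite mulr0 addr0 => /esym/eqP.
    rewrite !mulf_eq0 (negbTE sn) (negbTE k2n) (negbTE x2n) intr_eq0 !orbF /= => /eqP.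
    lia.
  subst c.
  have ad : a * d = 1 by nia.
  have da : d = a by have := @u1 _ _ ad; lia.
  subst d.
  have e00' : k1 * x1%:~R = s * a%:~R * (k2 * x2%:~R) by rewrite e00; ring.
  have e11' : k1 * z1%:~R = s * a%:~R * (k2 * z2%:~R) by rewrite e11; ring.
  have [kk xx yy zz] := keyG Hs ad K1 K2 hx1 hx2 hy1 hy2 e00' e01 e11'.
  by rewrite Eg1 Eg2 kk xx yy zz.
- have c0 : C = 0.
    move: e10; rewrite mulr0 addr0 => /esym/eqP.
    rewrite !mulf_eq0 (negbTE sn) (negbTE k2n) (negbTE x2n) (negbTE r2n) intr_eq0 !orbF /= => /eqP.
    lia.
  subst C; exfalso; nia.
Qed.
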